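(* Let $1\le d<n$ be integers. Then there exists an independent set $\mathcal{A}\subseteq\mathcal{A}(n,d)$ with $|\mathcal{A}|=\binom{n-1}{d}$.
   Context: For integers $1\le d<n$, let $I(n,d)$ be the set of all subsets of $[n]=\{1,\dots,n\}$ of cardinality $d+1$. For $I\in I(n,d)$, let $A_I$ be the set of all $d$-tuples with pairwise distinct entries taken from $I$ (so $|A_I|=(d+1)!$), and let $\mathcal{A}(n,d)=\{A_I : I\in I(n,d)\}$. For $\mathcal{A}\subseteq\mathcal{A}(n,d)$, a $d$-tuple $t$ is called unique with respect to $\mathcal{A}$ if there exists $A\in\mathcal{A}$ with $t\in A$ and $t\notin A'$ for every $A'\in\mathcal{A}\setminus\{A\}$. A set $\mathcal{A}\subseteq\mathcal{A}(n,d)$ is called independent if every nonempty subset of $\mathcal{A}$ has at least one $d$-tuple that is unique with respect to that subset. *)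

(* Defs.v *)
(* The ground set [n] = {1..n} is modelled by 'I_n = {0..n-1}. *)
From mathcomp Require Import all_boot.
Set Implicit Arguments. Unset Strict Implicit. Unset Printing Implicit Defensive.

Definition A_I (n d : nat) (I : {set 'I_n}) : {set d.-tuple 'I_n} :=
  [set t : d.-tuple 'I_n | uniq t && all (fun x => x \in I) t].

Definition calA (n d : nat) : {set {set d.-tuple 'I_n}} :=
  [set A_I d I | I in [set I : {set 'I_n} | #|I| == d.+1]].

Definition unique_wrt (n d : nat) (F : {set {set d.-tuple 'I_n}}) (t : d.-tuple 'I_n) : Prop :=
  exists2 A, A \in F & (t \in A) /\ forall A', A' \in F -> A' != A -> t \notin A'.

Definition independent (n d : nat) (F : {set {set d.-tuple 'I_n}}) : Prop :=
  forall G : {set {set d.-tuple 'I_n}}, G \subset F -> G != set0 ->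
    exists t : d.-tuple 'I_n, unique_wrt G t.

(* Main.v *)
Require Import Defs.
From mathcomp Require Import all_boot.

Section Aux.
Variables (m d : nat).
Local Notation T := 'I_m.+1.
Definition S0 : {set {set T}} := [set J : {set T} | (J \subset [set~ ord0]) && (#|J| == d)].

Lemma tupJ (J : {set T}) : J \in S0 -> {t : d.-tuple T | val t = enum J}.
Proof.
rewrite inE => /andP[_ /eqP hJ].
have h : size (enum J) == d by rewrite -cardE hJ.
by exists (Tuple h).
Qed.

Lemma t_in (J : {set T}) (t : d.-tuple T) : val t = enum J -> t \in A_I d (ord0 |: J).
Proof.
move=> ht; rewrite inE ht enum_uniq /=; apply/allP => x.
by rewrite mem_enum => xJ; rewrite setU1r.
Qed.

Lemma keyL (J J' : {set T}) (t : d.-tuple T) : J \in S0 -> J' \in S0 ->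
  val t = enum J -> t \in A_I d (ord0 |: J') -> J = J'.
Proof.
rewrite /S0 !inE => /andP[sJ /eqP cJ] /andP[_ /eqP cJ'] ht.
rewrite ?inE ht => /andP[_ /allP hall].
apply/eqP; rewrite eqEcard cJ cJ' leqnn andbT.
apply/subsetP => x xJ.
have := hall x; rewrite mem_enum => /(_ xJ); rewrite !inE => /orP[/eqP x0|//].
by move: (subsetP sJ x xJ); rewrite !inE x0 eqxx.
Qed.
End Aux.
Arguments tupJ {m d J}.
Arguments t_in {m d J t}.
Arguments keyL {m d J J' t}.

Theorem mainTheorem4 (n d : nat) (hd : 1 <= d) (hdn : d < n) :
  exists F : {set {set d.-tuple 'I_n}},
    [/\ F \subset calA n d, independent F & #|F| = 'C(n.-1, d)].
Proof.
case: n hdn => [//|m] hdn.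
exists [set A_I d (ord0 |: J) | J in S0 m d]; split.
- apply/subsetP => A /imsetP[J JS ->].
  apply/imsetP; exists (ord0 |: J) => //.
  move: JS; rewrite /S0 !inE => /andP[sJ /eqP cJ].
  rewrite cardsU1 cJ.
  case: (boolP (ord0 \in J)) => // h0.
  by move: (subsetP sJ _ h0); rewrite !inE eqxx.
- move=> G sG /set0Pn[A AG].
  have := subsetP sG A AG => /imsetP[J JS eA].
  have [t ht] := tupJ JS.
  exists t; exists A => //; split; first by rewrite eA; exact: t_in.
  move=> A' A'G; have := subsetP sG A' A'G => /imsetP[J' J'S eA'].
  apply: contra => tin.
  rewrite eA eA'; rewrite eA' in tin.
  by rewrite (keyL JS J'S ht tin).
- rewrite card_in_imset.
    rewrite /S0 cards_draws cardsC1 card_ord //.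
  move=> J J' JS J'S e.
  have [t ht] := tupJ JS.
  apply: (keyL JS J'S ht); rewrite -e; exact: t_in.
Qed.
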